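(* Let $\lambda$ be a positive integer, let $\mathbb{F}$ be a finite field with $|\mathbb{F}| = q$ where $\lambda^2/2 \le q \le 2\lambda^2$, and let $m = \lambda^{100}$. For sets $U_1,\dots,U_m \subseteq \mathbb{F}\times\mathbb{F}$, let $M \in \mathbb{F}^{m \times (\mathbb{F}\times\mathbb{F})}$ be the matrix with entries $M_{i,(\alpha,\beta)} = \mathbf{1}[(\alpha,\beta)\in U_i]$ (entries $0,1 \in \mathbb{F}$), and consider the algorithm that outputs ``Case (1)'' if $\mathrm{rank}_{\mathbb{F}}(M) < q^2-q+1$ and ``Case (2)'' otherwise. Let $\pi$ be any permutation of $\mathbb{F}\times\mathbb{F}$. Then, for all sufficiently large $\lambda$: (i) If $p_1,\dots,p_m \in \mathbb{F}[X]$ are any polynomials of degree at most $\lambda$ and $U_i = \{\pi(x,p_i(x)) : x\in\mathbb{F}\}$, the algorithm outputs ``Case (1)'' (with probability $1$). (ii) If $q_1,\dots,q_m:\mathbb{F}\to\mathbb{F}$ are independent uniformly random functions and $U_i = \{\pi(x,q_i(x)) : x\in\mathbb{F}\}$, the algorithm outputs ``Case (2)'' with probability at least $1-e^{-\lambda^{97}}$ over the choice of $q_1,\dots,q_m$; in fact, with this probability $\mathrm{rank}_{\mathbb{F}}(M) = q^2-q+1$.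
   Context: This refutes the conjecture that, for uniformly random $\pi$, random polynomials $p_i$ of degree $\le\lambda$ and random functions $q_i$, the tuples $(\{\pi(x,p_i(x)):x\in\mathbb{F}\})_{i\le m}$ and $(\{\pi(x,q_i(x)):x\in\mathbb{F}\})_{i\le m}$ are computationally indistinguishable. The rank is over the field $\mathbb{F}$. *)

(* Defs.v *)
From Stdlib Require Import Reals.
From mathcomp Require Import all_boot all_order all_algebra all_fingroup.
Set Implicit Arguments. Unset Strict Implicit. Unset Printing Implicit Defensive.
Import GRing.Theory.
Local Open Scope ring_scope.

Definition graph_set (F : finFieldType) (pi : {perm F * F}) (f : F -> F)
  : {set F * F} := [set pi (x, f x) | x : F].

Definition incmx (F : finFieldType) (m : nat) (U : 'I_m -> {set F * F})
  : 'M[F]_(m, #|{: F * F}|) :=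
  \matrix_(i < m, j < #|{: F * F}|) (if enum_val j \in U i then 1 else 0).

Inductive outcome := Case1 | Case2.

Definition algo (F : finFieldType) (m : nat) (U : 'I_m -> {set F * F}) : outcome :=
  if (\rank (incmx U) < #|F| ^ 2 - #|F| + 1)%N then Case1 else Case2.

Definition is_case2 (o : outcome) : bool := if o is Case2 then true else false.

(* Main.v *)
Require Import Defs.
From Stdlib Require Import Reals.
From mathcomp Require Import all_boot all_order all_algebra all_fingroup.
From Stdlib Require Import Lra.
From mathcomp Require Import cyclic finfield zify.
Set Implicit Arguments. Unset Strict Implicit. Unset Printing Implicit Defensive.
Import GRing.Theory.
Local Open Scope ring_scope.


Section S.
Variable F : finFieldType.
Variable pi : {perm F * F}.

Lemma card_char : (1 : F) *+ #|F| = 0.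
Proof. by rewrite -cardsT -FinRing.zmodXgE expg_cardG // inE. Qed.

Lemma exists_nonunity k : (0 < k)%N -> (k < #|F|.-1)%N ->
  exists c : F, (c != 0) && (c ^+ k != 1).
Proof.
move=> k0 kq.
case: (pickP [pred c : F | (c != (0:F)) && (c ^+ k != (1:F))]) => [c Hc | H]; first by exists c.
exfalso.
have : (size (enum [pred c : F | c != 0%R]) <= k)%N.
  apply: max_unity_roots => //; last exact: enum_uniq.
  apply/allP => c; rewrite mem_enum inE => c0; rewrite unity_rootE.
  by have := H c; rewrite /= c0 /= => /negbT; rewrite negbK.
rewrite -cardE cardC1; move: kq; rewrite ltnNge => /negP; done.
Qed.

Lemma sum_pow0 k : (k < #|F|.-1)%N -> \sum_(x : F) x ^+ k = 0.
Proof.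
case: k => [|k] kq.
  by under eq_bigr do rewrite expr0; rewrite sumr_const card_char.
have [c /andP [c0 ck]] := exists_nonunity (ltn0Sn k) kq.
set S := \sum_x _.
have : S = c ^+ k.+1 * S.
  rewrite /S mulr_sumr (reindex_inj (mulfI c0)) /=.
  by apply: eq_bigr => x _; rewrite exprMn.
move=> h; apply/eqP.
have : (c ^+ k.+1 - 1) * S == 0 by rewrite mulrBl mul1r -h subrr.
by rewrite mulf_eq0 subr_eq0 (negbTE ck).
Qed.

Lemma sum_horner0 (p : {poly F}) : (size p <= #|F|.-1)%N -> \sum_(x : F) p.[x] = 0.
Proof.
move=> sp.
under eq_bigr do rewrite horner_coef.
rewrite exchange_big /= big1 // => i _.
by rewrite -mulr_sumr sum_pow0 ?mulr0 // (leq_trans (ltn_ord i)).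
Qed.



Lemma mulmx_incmx k m (A : 'M[F]_(k, #|{: F*F}|)) (f : 'I_m -> F -> F) r i :
 (A *m (incmx (fun i => graph_set pi (f i)))^T) r i
   = \sum_x A r (enum_rank (pi (x, f i x))).
Proof.
rewrite !mxE (reindex (@enum_rank _)); last first.
  by exists enum_val => z _; [exact: enum_rankK | exact: enum_valK].
rewrite (eq_bigr (fun z => if z \in graph_set pi (f i) then A r (enum_rank z) else 0)); last first.
  by move=> z _; rewrite !mxE enum_rankK; case: ifP; rewrite ?mulr1 ?mulr0.
rewrite -big_mkcond /graph_set big_imset //.
move=> x y _ _ /perm_inj [] //.
Qed.

Definition Gmx (G : F -> F * F -> F) : 'M[F]_(#|F|, #|{: F * F}|) :=
  \matrix_(r, j) G (enum_val r) ((pi^-1)%g (enum_val j)).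

Lemma mul_Gmx G (u : 'rV[F]_#|F|) z :
  (u *m Gmx G) 0 (enum_rank (pi z)) = \sum_a u 0 (enum_rank a) * G a z.
Proof.
rewrite !mxE (reindex (@enum_rank _)); last first.
  by exists enum_val => a _; [exact: enum_rankK | exact: enum_valK].
by apply: eq_bigr => a _; rewrite !mxE !enum_rankK permK.
Qed.

Definition hrow (a : F) (z : F * F) : F :=
  if a == 0 then z.2 else (z.1 == a)%:R - (z.1 == 0)%:R.
Definition dhrow (a : F) (z : F * F) : F :=
  if a == 0 then 0 else (z.1 == a)%:R - (z.1 == 0)%:R.

Lemma hrow_orth a (f : F -> F) : a != 0 -> \sum_x hrow a (x, f x) = 0.
Proof.
move=> a0; rewrite /hrow (negbTE a0) /= sumrB.
rewrite (bigD1 a) //= eqxx big1 => [|x /negbTE -> //].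
rewrite (bigD1 0) //= eqxx big1 => [|x /negbTE -> //].
by rewrite !addr0 subrr.
Qed.

Lemma dhrow_orth a (f : F -> F) : \sum_x dhrow a (x, f x) = 0.
Proof.
rewrite /dhrow; case: eqP => [_|/eqP a0]; first by rewrite big1.
have := hrow_orth f a0; by rewrite /hrow (negbTE a0).
Qed.

Lemma hrow_indep (c : F -> F) :
  (forall z, \sum_a c a * hrow a z = 0) -> forall a, c a = 0.
Proof.
move=> H.
have cb : forall b, b != 0 -> c b = 0.
  move=> b b0; have := H (b, 0); rewrite (bigD1 b) //= big1 => [|a ab].
    by rewrite /hrow (negbTE b0) /= eqxx subr0 addr0 mulr1n mulr1.
  rewrite /hrow; case: eqP => [->|/eqP a0]; first by rewrite mulr0.
  by rewrite /= eq_sym (negbTE ab) (negbTE b0) subrr mulr0.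
move=> a; have [->|a0] := eqVneq a 0; last exact: cb a0.
have := H (0, 1); rewrite (bigD1 0) //= big1 => [|b b0]; last by rewrite cb ?mul0r.
by rewrite /hrow eqxx /= mulr1 addr0.
Qed.


Definition Bmx := Gmx hrow.
Definition Dmx := Gmx dhrow.

Lemma Gmx_entry G r z : Gmx G r (enum_rank (pi z)) = G (enum_val r) z.
Proof. by rewrite mxE enum_rankK permK. Qed.

Lemma row_free_B : row_free Bmx.
Proof.
rewrite -kermx_eq0; apply/eqP/row_matrixP => i; rewrite row0.
set u := row i (kermx Bmx).
have uB : u *m Bmx = 0 by rewrite /u -row_mul mulmx_ker row0.
have H0 : forall z, \sum_a u 0 (enum_rank a) * hrow a z = 0.
  by move=> z; rewrite -mul_Gmx uB mxE.
have c0 := @hrow_indep (fun a => u 0 (enum_rank a)) H0.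
apply/rowP => j; have := c0 (enum_val j); rewrite /= enum_valK => ->; by rewrite mxE.
Qed.

Lemma B_orth m (p : 'I_m -> {poly F}) : (forall i, (size (p i) <= #|F|.-1)%N) ->
  Bmx *m (incmx (fun i => graph_set pi (fun x => (p i).[x])))^T = 0.
Proof.
move=> sp; apply/matrixP => r i; rewrite mulmx_incmx mxE.
under eq_bigr do rewrite Gmx_entry.
have [e|ne] := eqVneq (enum_val r) 0; last exact: hrow_orth.
under eq_bigr do rewrite /hrow e eqxx /=.
exact: sum_horner0.
Qed.

Lemma D_orth m (f : 'I_m -> F -> F) :
  Dmx *m (incmx (fun i => graph_set pi (f i)))^T = 0.
Proof.
apply/matrixP => r i; rewrite mulmx_incmx mxE.
under eq_bigr do rewrite Gmx_entry.
exact: dhrow_orth.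
Qed.
End S.
Section T.
Variable F : finFieldType.
Variable pi : {perm F * F}.
Local Notation Bmx := (Bmx pi).
Local Notation Dmx := (Dmx pi).

Lemma card_gt1 : (1 < #|F|)%N.
Proof. exact: finNzRing_gt1. Qed.

Lemma rank_D_ub : (\rank Dmx <= #|F|.-1)%N.
Proof.
pose r0 := enum_rank (0 : F).
have : row r0 Dmx = 0.
  by apply/rowP => j; rewrite !mxE enum_rankK /dhrow eqxx.
rewrite rowE.
move/sub_kermxP/mxrankS; rewrite mxrank_delta mxrank_ker => h.
have h1 : (1 <= #|F| - \rank Dmx)%N := h. have := card_gt1; lia.
Qed.

Lemma rank_D_lb : (#|F|.-1 <= \rank Dmx)%N.
Proof.
pose r0 := enum_rank (0 : F).
have hB : \rank Bmx = #|F| by apply/eqP; exact: row_free_B.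
have e : Bmx = Dmx + delta_mx r0 0 *m row r0 Bmx.
  apply/matrixP => r j; rewrite !mxE big_ord1 !mxE /= eqxx andbT.
  have [->|ne] := eqVneq r r0.
    by rewrite /r0 enum_rankK /dhrow eqxx add0r mulr1n mul1r.
  have ne0 : enum_val r != 0.
    by apply: contra ne => /eqP h; rewrite /r0 -h enum_valK.
  by rewrite /dhrow /hrow (negbTE ne0) mul0r addr0.
set E := delta_mx r0 0 *m row r0 Bmx in e *.
have h1 : (\rank Bmx <= \rank Dmx + \rank E)%N.
  by rewrite {1}e; apply: mxrank_add.
have h2 : (\rank E <= 1)%N.
  exact: leq_trans (mxrankM_maxl _ _) (rank_leq_col _).
rewrite hB in h1. lia.
Qed.

Lemma good_rank m (f : 'I_m -> F -> F) :
  (forall u : 'rV[F]_#|{: F * F}|,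
     u *m (incmx (fun i => graph_set pi (f i)))^T = 0 -> (u <= Dmx)%MS) ->
  \rank (incmx (fun i => graph_set pi (f i))) = (#|F| ^ 2 - #|F| + 1)%N.
Proof.
set M := incmx _ => H.
have KD : (kermx M^T <= Dmx)%MS.
  apply/row_subP => i; apply: H; by rewrite -row_mul mulmx_ker row0.
have DK : (Dmx <= kermx M^T)%MS by apply/sub_kermxP; exact: D_orth.
have r1 := mxrankS KD. have r2 := mxrankS DK.
have r3 := rank_D_ub. have r4 := rank_D_lb.
rewrite mxrank_ker mxrank_tr in r1 r2.
have r5 := rank_leq_col M.
have cp : #|{: F * F}| = (#|F| * #|F|)%N by rewrite card_prod.
have hq := card_gt1.
rewrite -mulnn.
have r1' : (#|{: F * F}| - \rank M <= \rank Dmx)%N := r1.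
have r2' : (\rank Dmx <= #|{: F * F}| - \rank M)%N := r2.
have r5' : (\rank M <= #|{: F * F}|)%N := r5.

nia.
Qed.

Lemma sub_D (u : 'rV[F]_#|{: F * F}|) :
  (forall x y, u 0 (enum_rank (pi (x, y))) = u 0 (enum_rank (pi (x, 0)))) ->
  \sum_x u 0 (enum_rank (pi (x, 0))) = 0 -> (u <= Dmx)%MS.
Proof.
set h := fun z => u 0 (enum_rank (pi z)).
move=> Hc Hs; apply/submxP.
exists (\row_r (if enum_val r == 0 then 0 else h (enum_val r, 0))).
apply/rowP => j.
have -> : j = enum_rank (pi ((pi^-1)%g (enum_val j))) by rewrite permKV enum_valK.
case: ((pi^-1)%g (enum_val j)) => x y.
rewrite mul_Gmx Hc.
under eq_bigr do rewrite mxE enum_rankK.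
have [->|x0] := eqVneq x 0.
  rewrite (bigD1 0) //= eqxx mul0r add0r.
  rewrite (eq_bigr (fun a => - h (a, 0))); last first.
    move=> a a0; rewrite (negbTE a0) /dhrow (negbTE a0) eq_sym (negbTE a0) eqxx /=.
    by rewrite sub0r mulrN1.
  rewrite sumrN; apply/eqP; rewrite -addr_eq0.
  by move: Hs; rewrite (bigD1 0) //=; move/eqP.
rewrite (bigD1 x) //= big1 => [|a ax].
  by rewrite (negbTE x0) /dhrow (negbTE x0) eqxx subr0 mulr1n mulr1 addr0.
case: eqP => [_|/eqP a0]; first by rewrite mul0r.
by rewrite /dhrow (negbTE a0) eq_sym (negbTE ax) (negbTE x0) subrr mulr0.
Qed.

Definition Aset (u : 'rV[F]_#|{: F * F}|) : {set {ffun F -> F}} :=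
  [set f : {ffun F -> F} | \sum_x u 0 (enum_rank (pi (x, f x))) == 0].

Lemma Kset_eq m (u : 'rV[F]_#|{: F * F}|) (Q : {ffun 'I_m -> {ffun F -> F}}) :
  (u *m (incmx (fun i => graph_set pi (Q i)))^T == 0) = [forall i, Q i \in Aset u].
Proof.
apply/eqP/forallP => [H i|H].
  rewrite inE -(mulmx_incmx pi u (fun i x => Q i x) 0 i) H mxE //.
apply/rowP => i; rewrite mulmx_incmx mxE; by apply/eqP; move: (H i); rewrite inE.
Qed.

Lemma card_Kset m (A : {set {ffun F -> F}}) :
  #|[set Q : {ffun 'I_m -> {ffun F -> F}} | [forall i, Q i \in A]]| = (#|A| ^ m)%N.
Proof.
rewrite -[m in RHS]card_ord -card_ffun_on; apply: eq_card => Q.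
by rewrite inE; apply/forallP/ffun_onP.
Qed.

Lemma fiber_count (x0 : F) (P : {ffun F -> F} -> bool) :
  (forall f : {ffun F -> F},
     #|[set y | P [ffun x => if x == x0 then y else f x]]| <= #|F|.-1)%N ->
  (#|[set f | P f]| <= #|F|.-1 * #|F| ^ #|F|.-1)%N.
Proof.
move=> Hf.
pose upd (f : {ffun F -> F}) y := [ffun x => if x == x0 then y else f x].
pose phi (p : {ffun F -> F} * F) := (upd p.1 p.2, p.1 x0).
have phiK : involutive phi.
  move=> [f y]; rewrite /phi /=; congr pair; last by rewrite ffunE eqxx.
  by apply/ffunP => x; rewrite !ffunE; case: eqP => // ->.
have E : (\sum_(p : {ffun F -> F} * F) P (phi p).1
          = \sum_(p : {ffun F -> F} * F) P p.1)%N.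
  by rewrite [RHS](reindex_inj (inv_inj phiK)).
have L : (\sum_(p : {ffun F -> F} * F) P p.1 = #|[set f | P f]| * #|F|)%N.
  rewrite -(pair_big xpredT xpredT (fun f (_ : F) => (P f : nat))) /=.
  under eq_bigr do rewrite sum_nat_const.
  rewrite -big_distrr /= mulnC; congr muln.
  by rewrite -sum1dep_card [RHS]big_mkcond /=; apply: eq_bigr => f _; case: (P f).
have R : (\sum_(p : {ffun F -> F} * F) P (phi p).1 <= #|F| ^ #|F| * #|F|.-1)%N.
  rewrite -(pair_big xpredT xpredT (fun f y => (P (phi (f, y)).1 : nat))) /=.
  rewrite -card_ffun -sum_nat_const; apply: leq_sum => f _.
  apply: leq_trans (Hf f); rewrite -sum1dep_card; apply: eq_leq; rewrite [RHS]big_mkcond /=.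
  by apply: eq_bigr => y _; case: (P _).
have hq := card_gt1.
have : (#|[set f | P f]| * #|F| <= #|F|.-1 * #|F| ^ #|F|.-1 * #|F|)%N.
  rewrite -L -E -mulnA -expnSr prednK 1?mulnC //; lia.
by rewrite leq_pmul2r //; lia.
Qed.

Lemma Aset_bound (u : 'rV[F]_#|{: F * F}|) : ~~ (u <= Dmx)%MS ->
  (#|Aset u| <= #|F|.-1 * #|F| ^ #|F|.-1)%N.
Proof.
move=> Hu.
pose h := fun z => u 0 (enum_rank (pi z)).
case: (boolP [exists x, exists y, h (x, y) != h (x, 0)]).
  case/existsP => x0 /existsP [y0 hy0].
  rewrite /Aset; apply: (fiber_count (x0 := x0) (P := fun f : {ffun F -> F} => \sum_x u 0 (enum_rank (pi (x, f x))) == 0)) => f.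
  have e : forall y, \sum_x u 0 (enum_rank (pi (x, [ffun x => if x == x0 then y else f x] x)))
      = h (x0, y) + \sum_(x | x != x0) h (x, f x).
    move=> y; rewrite (bigD1 x0) //= ffunE eqxx; congr (_ + _).
    by apply: eq_bigr => x /negbTE xn; rewrite ffunE xn.
  set S := [set y | _].
  have : S != setT.
    apply/negP => /eqP ST.
    have : y0 \in S by rewrite ST inE.
    have : 0 \in S by rewrite ST inE.
    rewrite !inE !e => /eqP e0 /eqP e1.
    have E : h (x0, y0) = h (x0, 0).
      by apply: (addIr (\sum_(x | x != x0) h (x, f x))); rewrite e0 e1.
    by rewrite E eqxx in hy0.
  rewrite -properT => /proper_card; rewrite cardsT => hS.
  have hS' : (#|S| < #|F|)%N := hS. have hq := card_gt1; lia.
rewrite negb_exists => /forallP Hc.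
have Hc' : forall x y, h (x, y) = h (x, 0).
  move=> x y; apply/eqP; have := Hc x; rewrite negb_exists => /forallP /(_ y).
  by rewrite negbK.
have Hs : \sum_x h (x, 0) != 0.
  by apply: contra Hu => /eqP Hs; exact: sub_D Hc' Hs.
suff -> : Aset u = set0 by rewrite cards0.
apply/setP => f; rewrite !inE.
by rewrite (eq_bigr (fun x => h (x, 0))) ?(negbTE Hs) // => x _; exact: Hc'.
Qed.

Lemma leq_expn2 a b e : (a <= b)%N -> (a ^ e <= b ^ e)%N.
Proof. by move=> ab; elim: e => // e IH; rewrite !expnS leq_mul. Qed.

Lemma bad_count m :
  (#|[set Q : {ffun 'I_m -> {ffun F -> F}} |
     \rank (incmx (fun i => graph_set pi (Q i))) != (#|F| ^ 2 - #|F| + 1)%N]|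
   <= #|F| ^ (#|F| * #|F|) * (#|F|.-1 * #|F| ^ #|F|.-1) ^ m)%N.
Proof.
set X := (#|F|.-1 * #|F| ^ #|F|.-1)%N.
set Bad := [set Q | _].
pose G (Q : {ffun 'I_m -> {ffun F -> F}}) :=
  (\sum_(u : 'rV[F]_#|{: F * F}| | ~~ (u <= Dmx)%MS)
     (u *m (incmx (fun i => graph_set pi (Q i)))^T == 0%R : nat))%N.
have h1 : (#|Bad| <= \sum_Q G Q)%N.
  rewrite -sum1_card big_mkcond; apply: leq_sum => Q _; case: ifP => // QB.
  rewrite inE in QB.
  case: (boolP [exists u : 'rV[F]_#|{: F * F}|,
      (u *m (incmx (fun i => graph_set pi (Q i)))^T == 0) && ~~ (u <= Dmx)%MS]).
    case/existsP => u /andP [u1 u2].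
    by rewrite /G (bigD1 u) //= u1.
  move=> hn; exfalso; move: QB.
  rewrite (@good_rank m (fun i => Q i)) ?eqxx // => u u0.
  apply/negPn/negP => nu; move/negP: hn; apply; apply/existsP; exists u.
  by rewrite u0 eqxx nu.
have h2 : (\sum_Q G Q = \sum_(u : 'rV[F]_#|{: F * F}| | ~~ (u <= Dmx)%MS)
     #|[set Q : {ffun 'I_m -> {ffun F -> F}} | [forall i, Q i \in Aset u]]|)%N.
  rewrite /G exchange_big; apply: eq_bigr => u _.
  rewrite -sum1dep_card [RHS]big_mkcond /=; apply: eq_bigr => Q _.
  by rewrite Kset_eq; case: [forall i, _].
rewrite h2 in h1; apply: leq_trans h1 _.
under eq_bigr do rewrite card_Kset.
apply: leq_trans (_ : \sum_(u : 'rV[F]_#|{: F * F}| | ~~ (u <= Dmx)%MS) X ^ m <= _)%N.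
  by apply: leq_sum => u hu; apply: leq_expn2; exact: Aset_bound.
rewrite sum_nat_cond_const leq_mul2r; apply/orP; right.
apply: leq_trans (subset_leq_card (subsetT _)) _.
by rewrite cardsT card_mx card_prod mul1n.
Qed.
End T.

Section RealPart.
Local Open Scope R_scope.

Lemma INR_muln m n : INR (m * n)%N = INR m * INR n.
Proof. rewrite -mult_INR. reflexivity. Qed.
Lemma INR_addn m n : INR (m + n)%N = INR m + INR n.
Proof. rewrite -plus_INR. reflexivity. Qed.
Lemma INR_expn m n : INR (m ^ n)%N = INR m ^ n.
Proof. elim: n => [|n IH]; first by rewrite expn0. by rewrite expnS INR_muln IH /=. Qed.
Lemma INR_subn m n : (n <= m)%N -> INR (m - n)%N = INR m - INR n.
Proof. move=> /leP h; rewrite -minus_INR //. Qed.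
Lemma exp_powR x n : exp x ^ n = exp (INR n * x).
Proof. elim: n => [|n IH]; first by rewrite /= Rmult_0_l exp_0.
rewrite S_INR /= IH -exp_plus; f_equal; ring. Qed.
Lemma exp_le x y : x <= y -> exp x <= exp y.
Proof. case=> [h|->]; [left; exact: exp_increasing| right; reflexivity]. Qed.

Lemma real_bound (q m L : nat) : (1 <= q)%N -> (q ^ 4 + L * q <= m)%N ->
  INR (q ^ (q * q) * ((q - 1) * q ^ (q - 1)) ^ m)%N
  <= exp (- INR L) * INR ((q ^ q) ^ m)%N.
Proof.
move=> q1 hm.
have qq : (q ^ q = q * q ^ (q - 1))%N by rewrite -expnS subn1 prednK.
rewrite qq; rewrite !(INR_muln, INR_expn) INR_subn //; change (INR 1) with 1.
set Q := INR q. set M := INR m.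
have Q1 : 1 <= Q by rewrite /Q; apply: (le_INR 1); apply/leP.
have hM : Q ^ 4 + INR L * Q <= M.
  by rewrite /M /Q -INR_expn -INR_muln -INR_addn; apply: le_INR; apply/leP.
rewrite Rpow_mult_distr Rpow_mult_distr.
set A := (Q ^ (q - 1)) ^ m.
have A0 : 0 < A by apply: pow_lt; apply: pow_lt; lra.
have e1 : Q - 1 <= Q * exp (- / Q).
  have := exp_ineq1_le (- / Q).
  have : Q * (1 + - / Q) = Q - 1 by field; lra.
  move=> <- h; apply: Rmult_le_compat_l; lra.
have e2 : (Q - 1) ^ m <= Q ^ m * exp (- (M / Q)).
  have -> : - (M / Q) = INR m * - / Q by rewrite /M; field; lra.
  rewrite -exp_powR -Rpow_mult_distr.
  apply: pow_incr; split; lra.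
have e3 : Q ^ (q * q) <= exp (INR (q * q) * Q).
  rewrite -exp_powR; apply: pow_incr; split; first lra.
  have := exp_ineq1_le Q; lra.
have e4 : INR (q * q) * Q - M / Q <= - INR L.
  rewrite INR_muln -/Q.
  have : INR L + Q * Q * Q <= M / Q.
    apply: (Rmult_le_reg_r Q); first lra.
    have -> : M / Q * Q = M by field; lra.
    have h4 : Q ^ 4 = Q * Q * Q * Q by ring.
    rewrite h4 in hM; lra.
  lra.
have e5 := exp_le e4.
rewrite -/A.
have -> : Q ^ (q * q) * ((Q - 1) ^ m * A) = (Q ^ (q * q) * (Q - 1) ^ m) * A by ring.
have -> : exp (- INR L) * (Q ^ m * A) = (exp (- INR L) * Q ^ m) * A by ring.
apply: Rmult_le_compat_r; first lra.
apply: Rle_trans (_ : exp (INR (q * q) * Q) * (Q ^ m * exp (- (M / Q))) <= _).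
  apply: Rmult_le_compat; try lra. apply: pow_le; lra. apply: pow_le; lra.
have -> : exp (INR (q * q) * Q) * (Q ^ m * exp (- (M / Q))) =
   exp (INR (q * q) * Q - M / Q) * Q ^ m by rewrite /Rminus exp_plus; ring.
apply: Rmult_le_compat_r; first by apply: pow_le; lra.
exact: e5.
Qed.


Lemma ratio_lemma (g b t bd e : R) : 0 < t -> g + b = t -> b <= bd -> bd <= e * t ->
  Rge (g / t) (1 - e).
Proof.
move=> t0 hs hb hbd; apply: Rle_ge; apply: (Rmult_le_reg_r t) => //.
have -> : g / t * t = g by field; lra.
lra.
Qed.

Lemma ratio_mono (a a' t x : R) : 0 < t -> a <= a' -> Rge (a / t) x -> Rge (a' / t) x.
Proof.
move=> t0 h1 h2; apply: Rle_ge; apply: Rle_trans (Rge_le _ _ h2) _.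
apply: Rmult_le_compat_r => //; left; exact: Rinv_0_lt_compat.
Qed.
End RealPart.

Lemma nat_ineq (lam q : nat) : (4 <= lam)%N -> (q <= 2 * lam ^ 2)%N ->
  (q ^ 4 + lam ^ 97 * q <= lam ^ 100)%N.
Proof.
move=> l4 hq.
have a : (q ^ 4 <= 16 * lam ^ 8)%N.
  apply: leq_trans (leq_expn2 4 hq) _.
  by rewrite expnMn -expnM.
have b : (lam ^ 97 * q <= 2 * lam ^ 99)%N.
  apply: leq_trans (leq_mul (leqnn _) hq) _.
  by rewrite mulnCA -expnD.
have l0 : (0 < lam)%N by lia.
have c1 : (lam ^ 2 <= lam ^ 91)%N by apply: leq_pexp2l.
have c2 : (16 <= lam ^ 2)%N by rewrite -mulnn; exact: (leq_mul l4 l4).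
have c : (16 * lam ^ 8 <= 2 * lam ^ 99)%N.
  have -> : (lam ^ 99 = lam ^ 91 * lam ^ 8)%N by rewrite -expnD.
  have hA : (16 <= lam ^ 91)%N := leq_trans c2 c1.
  apply: leq_trans (leq_mul hA (leqnn (lam ^ 8))) _; exact: leq_pmull.
have d : (4 * lam ^ 99 <= lam ^ 100)%N.
  by rewrite [X in (_ <= X)%N]expnS leq_mul2r l4 orbT.
move: a b c d; clear.
generalize (q ^ 4)%N (lam ^ 97 * q)%N (lam ^ 8)%N (lam ^ 99)%N (lam ^ 100)%N.
move=> x1 x2 x3 x4 x5; lia.
Qed.

Theorem mainTheorem1 :
  exists N : nat, forall lam : nat, (N <= lam)%N -> (0 < lam)%N ->
  forall F : finFieldType,
    (lam ^ 2 <= 2 * #|F|)%N -> (#|F| <= 2 * lam ^ 2)%N ->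
  forall pi : {perm F * F},
    (* (i) structured case: polynomials of degree <= lam *)
    (forall p : 'I_(lam ^ 100) -> {poly F},
        (forall i, (size (p i) <= lam.+1)%N) ->
        algo (fun i => graph_set pi (fun x => ((p i).[x])%R)) = Case1)
    /\
    (* (ii) random case: uniform q_i : F -> F, independent *)
    Rge (Rdiv (INR #|[set Q : {ffun 'I_(lam ^ 100) -> {ffun F -> F}} |
                        is_case2 (algo (fun i => graph_set pi (Q i)))]|)
              (INR #|{: {ffun 'I_(lam ^ 100) -> {ffun F -> F}}}|))
        (Rminus R1 (exp (Ropp (INR (lam ^ 97)))))
    /\
    Rge (Rdiv (INR #|[set Q : {ffun 'I_(lam ^ 100) -> {ffun F -> F}} |
                        \rank (incmx (fun i => graph_set pi (Q i)))
                          == (#|F| ^ 2 - #|F| + 1)%N]|)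
              (INR #|{: {ffun 'I_(lam ^ 100) -> {ffun F -> F}}}|))
        (Rminus R1 (exp (Ropp (INR (lam ^ 97))))).
Proof.
exists 4%N => lam l4 _ F h1 h2 pi.
have hq := card_gt1 F.
have cp : #|{: F * F}| = (#|F| * #|F|)%N by rewrite card_prod.
split.
  move=> p sp; rewrite /algo.
  set M := incmx _.
  have hsz : forall i, (size (p i) <= #|F|.-1)%N.
    move=> i; apply: leq_trans (sp i) _.
    move: h1; rewrite -mulnn => h1'; nia.
  have BK : (Bmx pi <= kermx M^T)%MS by apply/sub_kermxP; exact: B_orth.
  have := mxrankS BK; rewrite mxrank_ker mxrank_tr (eqP (row_free_B pi)) => hk.
  have hk' : (#|F| <= #|{: F * F}| - \rank M)%N := hk.
  have r5 : (\rank M <= #|{: F * F}|)%N := rank_leq_col M.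
  rewrite ifT //; rewrite -mulnn; nia.
set m := (lam ^ 100)%N.
set T := ({ffun 'I_m -> {ffun F -> F}}).
set Good := [set Q : T | \rank (incmx (fun i => graph_set pi (Q i))) == (#|F| ^ 2 - #|F| + 1)%N].
have hb := bad_count pi m.
set Bad := [set Q : T | _] in hb.
have hGB : (#|Good| + #|Bad| = #|{: T}|)%N.
  have -> : Bad = ~: Good by apply/setP => Q; rewrite !inE.
  by rewrite cardsC.
have hT : #|{: T}| = ((#|F| ^ #|F|) ^ m)%N by rewrite card_ffun card_ffun card_ord.
have hnat := nat_ineq l4 h2.
have hR := real_bound (ltnW hq) hnat.
rewrite subn1 -/m -hT in hR.
have t0 : Rlt R0 (INR #|{: T}|).
  apply: lt_0_INR; apply/ltP; by rewrite hT !expn_gt0 (ltnW hq).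
have hgood : Rge (Rdiv (INR #|Good|) (INR #|{: T}|)) (Rminus R1 (exp (Ropp (INR (lam ^ 97))))).
  apply: (ratio_lemma (b := INR #|Bad|) (bd := INR (#|F| ^ (#|F| * #|F|) * (#|F|.-1 * #|F| ^ #|F|.-1) ^ m)%N)) => //.
    by rewrite -INR_addn hGB.
  by apply: le_INR; apply/leP.
split => //.
apply: ratio_mono t0 _ hgood.
apply: le_INR; apply/leP; apply: subset_leq_card; apply/subsetP => Q.
rewrite !inE /algo => /eqP ->.
by rewrite ltnn.
Qed.
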